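(* Let $a\ne0$ and let $A,B\in\mathbb R$ not both zero. Define $h:\mathbb R\to\mathbb R$, $h(x):=A\cosh(ax)\cos(ax)-B\sinh(ax)\sin(ax)$. Then the local extrema of $h$ are isolated and their absolute values are strictly increasing on the nonnegative real axis: $|h(x_1)|<|h(x_2)|$ whenever $0\le x_1<x_2$ are local extremum points of $h$. *)

(* Defs.v *)
From Stdlib Require Import Reals.
Open Scope R_scope.

Definition is_local_max (f : R -> R) (x : R) : Prop :=
  exists d : R, 0 < d /\ forall y : R, Rabs (y - x) < d -> f y <= f x.

Definition is_local_min (f : R -> R) (x : R) : Prop :=
  exists d : R, 0 < d /\ forall y : R, Rabs (y - x) < d -> f x <= f y.

Definition is_local_extremum (f : R -> R) (x : R) : Prop :=
  is_local_max f x \/ is_local_min f x.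

Definition hfun (a A B : R) (x : R) : R :=
  A * cosh (a * x) * cos (a * x) - B * sinh (a * x) * sin (a * x).

(* Main.v *)
From Coquelicot Require Import Coquelicot.
From Stdlib Require Import Reals Lra Psatz.
From Stdlib Require Import Classical.
Require Import Defs.
From Stdlib Require Import Reals.
Open Scope R_scope.

Lemma ch2 x : cosh x * cosh x = 1 + sinh x * sinh x.
Proof.
  unfold cosh, sinh. rewrite exp_Ropp. assert (H := exp_pos x). field. lra.
Qed.

Lemma sc2 x : cos x * cos x = 1 - sin x * sin x.
Proof. pose proof (sin2_cos2 x). unfold Rsqr in H. lra. Qed.

Lemma sinh_opp x : sinh (- x) = - sinh x.
Proof. unfold sinh. rewrite Ropp_involutive. field. Qed.
Lemma cosh_opp x : cosh (- x) = cosh x.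
Proof. unfold cosh. rewrite Ropp_involutive. field. Qed.

Lemma cosh_pos x : 0 < cosh x.
Proof. unfold cosh. pose proof (exp_pos x). pose proof (exp_pos (-x)). lra. Qed.

Lemma sinh_pos x : 0 < x -> 0 < sinh x.
Proof. intro. rewrite <- sinh_0. now apply sinh_lt. Qed.

Lemma cosh_gt1 x : 0 < x -> 1 < cosh x.
Proof. intro. pose proof (ch2 x). pose proof (sinh_pos x H). pose proof (cosh_pos x). nra. Qed.

Lemma incr (f f' : R -> R) a b : a < b ->
  (forall c, a <= c <= b -> is_derive f c (f' c)) ->
  (forall c, a < c < b -> 0 < f' c) -> f a < f b.
Proof.
  intros Hab Hd Hp.
  destruct (MVT_cor2 f f' a b Hab) as [c [Hc1 Hc2]].
  { intros c Hc. apply is_derive_Reals. now apply Hd. }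
  pose proof (Hp c Hc2). nra.
Qed.

Lemma is_derive_sinh' x : is_derive sinh x (cosh x).
Proof. apply is_derive_Reals, derivable_pt_lim_sinh. Qed.

Lemma sinh_gt_abs_sin t : 0 < t -> Rabs (sin t) < sinh t.
Proof.
  intro Ht.
  assert (H1 : (fun x => sinh x - sin x) 0 < (fun x => sinh x - sin x) t).
  { apply (incr (fun x => sinh x - sin x) (fun x => cosh x - cos x) 0 t); auto.
    - intros c _. auto_derive; auto. ring.
    - intros c Hc. pose proof (cosh_gt1 c (proj1 Hc)). pose proof (COS_bound c). lra. }
  assert (H2 : (fun x => sinh x + sin x) 0 < (fun x => sinh x + sin x) t).
  { apply (incr (fun x => sinh x + sin x) (fun x => cosh x + cos x) 0 t); auto.
    - intros c _. auto_derive; auto. ring.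
    - intros c Hc. pose proof (cosh_gt1 c (proj1 Hc)). pose proof (COS_bound c). lra. }
  simpl in H1, H2. rewrite sinh_0, sin_0 in H1, H2.
  unfold Rabs; destruct (Rcase_abs (sin t)); lra.
Qed.

Definition Mf t := sinh t * cosh t + sin t * cos t.
Definition Ef t := sinh t * sinh t + sin t * sin t.
Definition Mpf t := cosh t * cosh t + sinh t * sinh t + cos t * cos t - sin t * sin t.

Lemma key_pos t : 0 < t ->
  0 < sinh t * cosh t - sin t * cos t /\ 0 < Mf t /\
  0 < sinh t * sinh t - sin t * sin t /\ 0 < Ef t.
Proof.
  intro Ht. pose proof (sinh_gt_abs_sin t Ht) as H.
  pose proof (cosh_gt1 t Ht). pose proof (sinh_pos t Ht).
  assert (Hsc : Rabs (sin t * cos t) <= Rabs (sin t)).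
  { rewrite Rabs_mult. pose proof (Rabs_pos (sin t)).
    assert (Rabs (cos t) <= 1). { apply Rabs_le. apply COS_bound. }
    pose proof (Rabs_pos (cos t)). nra. }
  pose proof (Rle_abs (sin t * cos t)).
  pose proof (Rle_abs (- (sin t * cos t))). rewrite Rabs_Ropp in H3.
  pose proof (Rabs_pos (sin t)).
  assert (sinh t < sinh t * cosh t) by nra.
  unfold Mf, Ef. repeat split; try nra.
  assert (sin t * sin t = Rabs (sin t) * Rabs (sin t)).
  { rewrite <- Rabs_mult. rewrite Rabs_right; nra. }
  nra.
Qed.
Lemma Mpf_eq t : Mpf t = 2 + 2 * (sinh t * sinh t - sin t * sin t).
Proof. unfold Mpf. rewrite ch2, sc2. ring. Qed.

Lemma M2E t : 0 < t -> 2 * Ef t < Mf t * Mf t.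
Proof.
  intro Ht.
  assert (H : (fun x => Mf x * Mf x - 2 * Ef x) 0 < (fun x => Mf x * Mf x - 2 * Ef x) t).
  { apply (incr (fun x => Mf x * Mf x - 2 * Ef x)
            (fun x => 2 * Mf x * Mpf x - 2 * (2 * sinh x * cosh x + 2 * sin x * cos x)) 0 t); auto.
    - intros c _. unfold Mf, Ef, Mpf. auto_derive; auto. ring.
    - intros c Hc. destruct (key_pos c (proj1 Hc)) as [_ [H1 [H2 _]]].
      replace (2 * Mf c * Mpf c - 2 * (2 * sinh c * cosh c + 2 * sin c * cos c))
        with (2 * Mf c * (Mpf c - 2)) by (unfold Mf; ring).
      rewrite Mpf_eq. nra. }
  simpl in H. unfold Mf, Ef in *. rewrite sinh_0, sin_0 in H. lra.
Qed.

Lemma MpE t : Mpf t * Ef t - Mf t * Mf t = (sinh t * cosh t - sin t * cos t) ^ 2.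
Proof.
  unfold Mpf, Ef, Mf.
  pose proof (ch2 t). pose proof (sc2 t).
  set (sh := sinh t) in *. set (ch := cosh t) in *. set (s := sin t) in *. set (c := cos t) in *.
  assert (E : (ch * ch + sh * sh + c * c - s * s) * (sh * sh + s * s) - (sh * ch + s * c) * (sh * ch + s * c)
     - (sh * ch - s * c) ^ 2 = (ch*ch - 1 - sh*sh) * (s*s - sh*sh) + (c*c + s*s - 1)*(sh*sh - s*s)) by ring.
  assert (ch*ch - 1 - sh*sh = 0) by lra. assert (c*c + s*s - 1 = 0) by lra.
  rewrite H1, H2 in E. lra.
Qed.

Lemma Kmono t1 t2 : 0 < t1 -> t1 < t2 -> Mf t1 * Mf t1 / Ef t1 < Mf t2 * Mf t2 / Ef t2.
Proof.
  intros H1 H12.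
  apply (incr (fun x => Mf x * Mf x / Ef x)
     (fun x => (2 * Mf x * Mpf x * Ef x - Mf x * Mf x * (2 * Mf x)) / (Ef x * Ef x)) t1 t2); auto.
  - intros c Hc. destruct (key_pos c ltac:(lra)) as [_ [_ [_ HE]]].
    unfold Mf, Ef, Mpf in *. auto_derive.
    + lra.
    + field. lra.
  - intros c Hc. destruct (key_pos c ltac:(lra)) as [Hd [HM [_ HE]]].
    replace (2 * Mf c * Mpf c * Ef c - Mf c * Mf c * (2 * Mf c)) with
      (2 * Mf c * (Mpf c * Ef c - Mf c * Mf c)) by ring.
    rewrite MpE. apply Rdiv_lt_0_compat; [|nra].
    apply Rmult_lt_0_compat; [lra|]. apply pow_lt. lra.
Qed.

Definition Gf (A B t : R) := (A - B) * sinh t * cos t - (A + B) * cosh t * sin t.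
Definition Gp (A B t : R) := -2 * (A * sinh t * sin t + B * cosh t * cos t).

Lemma hfun_deriv a A B x : is_derive (hfun a A B) x (a * Gf A B (a * x)).
Proof. unfold hfun, Gf. auto_derive; auto. ring. Qed.

Lemma D_deriv a A B x : is_derive (fun y => a * Gf A B (a * y)) x (a * a * Gp A B (a * x)).
Proof. unfold Gf, Gp. auto_derive; auto. ring. Qed.

Lemma ext_crit f x l : is_local_extremum f x -> is_derive f x l -> l = 0.
Proof.
  intros He Hd. pose proof (proj1 (is_derive_Reals f x l) Hd) as Hl.
  set (pr := exist (fun l => derivable_pt_lim f x l) l Hl : derivable_pt f x).
  assert (E : derive_pt f x pr = l) by reflexivity.
  destruct He as [[d [Hd0 Hm]] | [d [Hd0 Hm]]].
  - rewrite <- E. apply (deriv_maximum f (x - d) (x + d) x pr); try lra.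
    intros y H1 H2. apply Hm. apply Rabs_def1; lra.
  - rewrite <- E. apply (deriv_minimum f (x - d) (x + d) x pr); try lra.
    intros y H1 H2. apply Hm. apply Rabs_def1; lra.
Qed.

Lemma nz_isol g x l : is_derive g x l -> l <> 0 -> g x = 0 ->
  exists d, 0 < d /\ forall y, 0 < Rabs (y - x) < d -> g y <> 0.
Proof.
  intros Hd Hl Hg. apply is_derive_Reals in Hd.
  destruct (Hd (Rabs l) (Rabs_pos_lt l Hl)) as [del Hdel].
  exists del. split; [apply cond_pos|]. intros y [Hy1 Hy2] Hgy.
  assert (Hh : y - x <> 0). { intro E. rewrite E, Rabs_R0 in Hy1. lra. }
  specialize (Hdel (y - x) Hh Hy2).
  replace (x + (y - x)) with y in Hdel by ring. rewrite Hgy, Hg in Hdel.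
  replace ((0 - 0) / (y - x) - l) with (- l) in Hdel by (field; auto).
  rewrite Rabs_Ropp in Hdel. lra.
Qed.

Lemma gen_alg A B p q u v : A * p - B * q = 0 -> p * p + q * q <> 0 ->
  (A * u - B * v) ^ 2 * (p * p + q * q) = (A * A + B * B) * (u * q - v * p) ^ 2.
Proof.
  intros H Hn.
  assert (K : (A * u - B * v) * (p * p + q * q) = (A * q + B * p) * (u * q - v * p)).
  { replace ((A * u - B * v) * (p * p + q * q)) with
      ((A * p - B * q) * (u * p + v * q) + (A * q + B * p) * (u * q - v * p)) by ring.
    rewrite H. ring. }
  assert (K2 : (A * q + B * p) ^ 2 = (A * A + B * B) * (p * p + q * q) - (A * p - B * q) ^ 2) by ring.
  rewrite H in K2.
  apply (Rmult_eq_reg_r (p * p + q * q)); auto.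
  replace ((A * u - B * v) ^ 2 * (p * p + q * q) * (p * p + q * q)) with
    (((A * u - B * v) * (p * p + q * q)) ^ 2) by ring.
  rewrite K. replace (((A * q + B * p) * (u * q - v * p)) ^ 2) with
    ((A * q + B * p) ^ 2 * (u * q - v * p) ^ 2) by ring.
  rewrite K2. ring.
Qed.

Lemma Mf_opp t : Mf (- t) = - Mf t.
Proof. unfold Mf. rewrite sinh_opp, cosh_opp, sin_neg, cos_neg. ring. Qed.
Lemma Ef_opp t : Ef (- t) = Ef t.
Proof. unfold Ef. rewrite sinh_opp, sin_neg. ring. Qed.

Lemma pos_or_neg (P : R -> Prop) : (forall t, 0 < t -> P t) -> (forall t, P (- t) -> P t) ->
  forall t, t <> 0 -> P t.
Proof.
  intros H1 H2 t Ht. destruct (Rlt_or_le 0 t) as [h|h]; [auto|].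
  apply H2, H1. lra.
Qed.

Lemma Ef_pos t : t <> 0 -> 0 < Ef t.
Proof.
  apply (pos_or_neg (fun t => 0 < Ef t)).
  - intros t0 H. apply key_pos; auto.
  - intros t0. rewrite Ef_opp. auto.
Qed.

Lemma det_nz t : t <> 0 -> sinh t * cosh t - sin t * cos t <> 0.
Proof.
  apply (pos_or_neg (fun t => sinh t * cosh t - sin t * cos t <> 0)).
  - intros t0 H. destruct (key_pos t0 H). lra.
  - intros t0. rewrite sinh_opp, cosh_opp, sin_neg, cos_neg. intros H E. apply H. lra.
Qed.

Lemma M2E' t : t <> 0 -> 2 * Ef t < Mf t * Mf t.
Proof.
  apply (pos_or_neg (fun t => 2 * Ef t < Mf t * Mf t)).
  - apply M2E.
  - intros t0. rewrite Ef_opp, Mf_opp. lra.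
Qed.

Lemma K_abs t : Mf (Rabs t) * Mf (Rabs t) / Ef (Rabs t) = Mf t * Mf t / Ef t.
Proof.
  unfold Rabs. destruct (Rcase_abs t); auto. rewrite Mf_opp, Ef_opp. f_equal. ring.
Qed.

Lemma crit_sq A B t : Gf A B t = 0 -> t <> 0 ->
  (A * cosh t * cos t - B * sinh t * sin t) ^ 2 * (2 * Ef t) = (A * A + B * B) * (Mf t * Mf t).
Proof.
  intros HG Ht.
  pose proof (ch2 t). pose proof (sc2 t). pose proof (Ef_pos t Ht).
  set (p := sinh t * cos t - cosh t * sin t).
  set (q := sinh t * cos t + cosh t * sin t).
  assert (Hpq : p * p + q * q = 2 * Ef t).
  { unfold p, q, Ef. nra. }
  assert (Huv : cosh t * cos t * q - sinh t * sin t * p = Mf t).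
  { unfold p, q, Mf.
    transitivity (sinh t * cosh t * (cos t * cos t + sin t * sin t) + sin t * cos t * (cosh t * cosh t - sinh t * sinh t)); [ring|].
    replace (cos t * cos t + sin t * sin t) with 1 by lra.
    replace (cosh t * cosh t - sinh t * sinh t) with 1 by lra. ring. }
  rewrite <- Hpq.
  replace (A * cosh t * cos t - B * sinh t * sin t) with
    (A * (cosh t * cos t) - B * (sinh t * sin t)) by ring.
  rewrite gen_alg.
  - rewrite Huv. ring.
  - unfold p, q. unfold Gf in HG. lra.
  - lra.
Qed.

Lemma Gp_nz A B t : ~ (A = 0 /\ B = 0) -> Gf A B t = 0 -> (t <> 0 \/ B <> 0) -> Gp A B t <> 0.
Proof.
  intros HAB HG Hor HGp. unfold Gf, Gp in *.
  destruct (Req_dec t 0) as [E|E].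
  - subst t. destruct Hor as [H|H]; [lra|].
    rewrite sinh_0, cosh_0, sin_0, cos_0 in HGp. lra.
  - apply HAB. pose proof (det_nz t E) as Hd.
    pose proof (ch2 t). pose proof (sc2 t).
    set (sh := sinh t) in *. set (ch := cosh t) in *. set (s := sin t) in *. set (c := cos t) in *.
    assert (e1 : A * (sh * s) + B * (ch * c) = 0) by lra.
    assert (e2 : A * (sh * c - ch * s) + B * (- (sh * c + ch * s)) = 0) by lra.
    assert (Hdet : (sh * s) * (- (sh * c + ch * s)) - (ch * c) * (sh * c - ch * s) = - (sh * ch - s * c)).
    { transitivity (s * c * (ch * ch - sh * sh) - sh * ch * (s * s + c * c)); [ring|].
      replace (ch * ch - sh * sh) with 1 by lra. replace (s * s + c * c) with 1 by lra. ring. }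
    assert (HA : A * ((sh * s) * (- (sh * c + ch * s)) - (ch * c) * (sh * c - ch * s)) = 0).
    { replace (A * ((sh * s) * (- (sh * c + ch * s)) - (ch * c) * (sh * c - ch * s))) with
        ((- (sh * c + ch * s)) * (A * (sh * s) + B * (ch * c)) - (ch * c) * (A * (sh * c - ch * s) + B * (- (sh * c + ch * s)))) by ring.
      rewrite e1, e2. ring. }
    assert (HB : B * ((sh * s) * (- (sh * c + ch * s)) - (ch * c) * (sh * c - ch * s)) = 0).
    { replace (B * ((sh * s) * (- (sh * c + ch * s)) - (ch * c) * (sh * c - ch * s))) with
        ((sh * s) * (A * (sh * c - ch * s) + B * (- (sh * c + ch * s))) - (sh * c - ch * s) * (A * (sh * s) + B * (ch * c))) by ring.
      rewrite e1, e2. ring. }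
    rewrite Hdet in HA, HB.
    split.
    + apply Rmult_integral in HA. destruct HA; auto. exfalso. apply Hd. lra.
    + apply Rmult_integral in HB. destruct HB; auto. exfalso. apply Hd. lra.
Qed.

Lemma q_neg t : 0 < t < PI -> sinh t * cos t - cosh t * sin t < 0.
Proof.
  intros [H1 H2].
  assert (H : (fun x => - (sinh x * cos x - cosh x * sin x)) 0 <
              (fun x => - (sinh x * cos x - cosh x * sin x)) t).
  { apply (incr (fun x => - (sinh x * cos x - cosh x * sin x)) (fun x => 2 * sinh x * sin x) 0 t); auto.
    - intros c _. auto_derive; auto. ring.
    - intros c Hc. pose proof (sinh_pos c (proj1 Hc)). pose proof (sin_gt_0 c (proj1 Hc) ltac:(lra)).
      nra. }
  simpl in H. rewrite sinh_0, sin_0 in H. lra.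
Qed.

Lemma Gf_B0 A t : A <> 0 -> 0 < Rabs t < PI -> Gf A 0 t <> 0.
Proof.
  intros HA Ht. unfold Gf.
  replace ((A - 0) * sinh t * cos t - (A + 0) * cosh t * sin t) with
    (A * (sinh t * cos t - cosh t * sin t)) by ring.
  intro E. apply Rmult_integral in E. destruct E as [E|E]; [auto|].
  unfold Rabs in Ht. destruct (Rcase_abs t).
  - pose proof (q_neg (- t) ltac:(lra)). rewrite sinh_opp, cosh_opp, sin_neg, cos_neg in H. lra.
  - pose proof (q_neg t ltac:(lra)). lra.
Qed.

Lemma crit_of_ext a A B x : a <> 0 -> is_local_extremum (hfun a A B) x -> Gf A B (a * x) = 0.
Proof.
  intros ha He. pose proof (ext_crit _ _ _ He (hfun_deriv a A B x)) as E.
  apply Rmult_integral in E. destruct E; [contradiction|auto].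
Qed.

Theorem propositionC2 (a A B : R) (ha : a <> 0) (hAB : ~ (A = 0 /\ B = 0)) :
  (forall x : R, is_local_extremum (hfun a A B) x ->
     exists d : R, 0 < d /\
       forall y : R, 0 < Rabs (y - x) < d -> ~ is_local_extremum (hfun a A B) y) /\
  (forall x1 x2 : R, 0 <= x1 -> x1 < x2 ->
     is_local_extremum (hfun a A B) x1 -> is_local_extremum (hfun a A B) x2 ->
     Rabs (hfun a A B x1) < Rabs (hfun a A B x2)).
Proof.
  split.
  - intros x Hx. pose proof (crit_of_ext a A B x ha Hx) as HG.
    destruct (classic (a * x = 0 /\ B = 0)) as [[E1 E2]|Hn].
    + subst B. assert (HA : A <> 0) by (intro; apply hAB; auto).
      assert (x = 0). { apply Rmult_integral in E1. destruct E1; [contradiction|auto]. }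
      subst x. pose proof (Rabs_pos_lt a ha).
      exists (PI / Rabs a). split. { apply Rdiv_lt_0_compat; auto. apply PI_RGT_0. }
      intros y Hy Hey. pose proof (crit_of_ext a A 0 y ha Hey) as Hy0.
      revert Hy0. apply Gf_B0; auto. rewrite Rminus_0_r in Hy.
      rewrite Rabs_mult. destruct Hy as [Hy1 Hy2]. split.
      * apply Rmult_lt_0_compat; auto.
      * apply (Rmult_lt_compat_l (Rabs a)) in Hy2; auto.
        replace (Rabs a * (PI / Rabs a)) with PI in Hy2 by (field; lra). auto.
    + assert (Hor : a * x <> 0 \/ B <> 0).
      { destruct (Req_dec (a * x) 0); [|auto]. destruct (Req_dec B 0); [|auto]. tauto. }
      pose proof (Gp_nz A B (a * x) hAB HG Hor) as Hgp.
      assert (Hl : a * a * Gp A B (a * x) <> 0).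
      { apply Rmult_integral_contrapositive_currified; [|exact Hgp].
        apply Rmult_integral_contrapositive_currified; exact ha. }
      assert (Hg0 : (fun y => a * Gf A B (a * y)) x = 0).
      { simpl. rewrite HG. ring. }
      destruct (nz_isol (fun y => a * Gf A B (a * y)) x (a * a * Gp A B (a * x))
                 (D_deriv a A B x) Hl Hg0) as [d [Hd Hiso]].
      exists d. split; auto. intros y Hy Hey.
      apply (Hiso y Hy). simpl. rewrite (crit_of_ext a A B y ha Hey). ring.
  - intros x1 x2 H1 H12 He1 He2.
    pose proof (crit_of_ext a A B x1 ha He1) as G1.
    pose proof (crit_of_ext a A B x2 ha He2) as G2.
    pose proof (Rabs_pos_lt a ha) as Ha.
    assert (Ht2 : a * x2 <> 0) by (apply Rmult_integral_contrapositive_currified; lra).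
    assert (HW : 0 < A * A + B * B).
    { destruct (Req_dec A 0); destruct (Req_dec B 0); try tauto; nra. }
    pose proof (crit_sq A B (a * x2) G2 Ht2) as S2.
    pose proof (Ef_pos _ Ht2) as E2. pose proof (M2E' _ Ht2) as M2.
    set (h1 := hfun a A B x1). set (h2 := hfun a A B x2).
    fold (hfun a A B x2) in S2. fold h2 in S2.
    assert (Hsq : h1 ^ 2 < h2 ^ 2).
    { destruct (Req_dec x1 0) as [Z|Z].
      - subst x1. unfold h1, hfun. rewrite Rmult_0_r, cosh_0, cos_0, sinh_0, sin_0.
        assert (h2 ^ 2 * (2 * Ef (a * x2)) > (A * A + B * B) * (2 * Ef (a * x2))) by nra.
        assert (h2 ^ 2 > A * A + B * B) by nra. nra.
      - assert (Ht1 : a * x1 <> 0) by (apply Rmult_integral_contrapositive_currified; lra).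
        pose proof (crit_sq A B (a * x1) G1 Ht1) as S1.
        fold (hfun a A B x1) in S1. fold h1 in S1.
        pose proof (Ef_pos _ Ht1) as E1.
        assert (Hk : Mf (a * x1) * Mf (a * x1) / Ef (a * x1) < Mf (a * x2) * Mf (a * x2) / Ef (a * x2)).
        { rewrite <- (K_abs (a * x1)), <- (K_abs (a * x2)). apply Kmono.
          - apply Rabs_pos_lt; auto.
          - rewrite !Rabs_mult. rewrite (Rabs_right x1), (Rabs_right x2) by lra.
            apply Rmult_lt_compat_l; auto. }
        assert (h1 ^ 2 = (A * A + B * B) / 2 * (Mf (a * x1) * Mf (a * x1) / Ef (a * x1))).
        { apply (Rmult_eq_reg_r (2 * Ef (a * x1))); [|lra]. rewrite S1. field. lra. }
        assert (h2 ^ 2 = (A * A + B * B) / 2 * (Mf (a * x2) * Mf (a * x2) / Ef (a * x2))).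
        { apply (Rmult_eq_reg_r (2 * Ef (a * x2))); [|lra]. rewrite S2. field. lra. }
        rewrite H, H0. apply Rmult_lt_compat_l; auto. lra. }
    rewrite <- (pow2_abs h1), <- (pow2_abs h2) in Hsq.
    pose proof (Rabs_pos h1). pose proof (Rabs_pos h2). nra.
Qed.
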